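(* Let $d\in\mathbb{N}$ and $k\in\mathbb{N}$. Suppose that $f\in\mathcal{G}_d$ is log-$k$-affine and that $\operatorname{supp} f\in\mathcal{P}$. Then there exist $\kappa(f)\leq k$, vectors $\alpha_1,\dotsc,\alpha_{\kappa(f)}\in\mathbb{R}^d$, scalars $\beta_1,\dotsc,\beta_{\kappa(f)}\in\mathbb{R}$ and a polyhedral subdivision $E_1,\dotsc,E_{\kappa(f)}$ of $\operatorname{supp} f$ such that $f(x)=\exp(\alpha_j^\top x+\beta_j)$ for all $x\in E_j$ and all $j$, and $\alpha_i\neq\alpha_j$ whenever $i\neq j$. Moreover, the triples $(\alpha_j,\beta_j,E_j)_{j=1}^{\kappa(f)}$ are unique up to reordering. In addition, if $\operatorname{supp} f\in\mathcal{P}^m$ for some $m\in\mathbb{N}\cup\{0\}$, then $E_j\in\mathcal{P}^{k+m-1}$ for all $j$.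
   Context: $\mathcal{G}_d$ is the set of functions $e^{\phi}$ where $\phi:\mathbb{R}^d\to[-\infty,\infty)$ is upper semi-continuous and concave. For $f:\mathbb{R}^d\to\mathbb{R}$, $\operatorname{supp} f:=\{x: f(x)\neq 0\}$. A function $f\in\mathcal{G}_d$ is log-$k$-affine if there exist closed sets $E_1,\dotsc,E_k$ with $\operatorname{supp} f=\bigcup_{j=1}^k E_j$ and $\log f$ affine on each $E_j$. A polyhedral set is an intersection of finitely many closed half-spaces; $\mathbb{R}^d$ itself is regarded as a polyhedral set with 0 facets. A facet of a convex set $E$ is a set $E\cap H$ of affine dimension $\dim(E)-1$, where $H$ is an affine hyperplane supporting $E$. $\mathcal{P}$ denotes the collection of polyhedral subsets of $\mathbb{R}^d$ with non-empty interior, and $\mathcal{P}^m$ those elements of $\mathcal{P}$ with at most $m$ facets. A (polyhedral) subdivision of $P\in\mathcal{P}$ is a finite collection $E_1,\dotsc,E_\ell\in\mathcal{P}$ with $P=\bigcup_j E_j$ and such that $E_i\cap E_j$ is a common face of $E_i$ and $E_j$ for all $i,j$. *)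

(* Defs.v *)
From HB Require Import structures.
From mathcomp Require Import all_boot all_order all_algebra.
From mathcomp Require Import all_classical all_reals all_analysis.
Set Implicit Arguments. Unset Strict Implicit. Unset Printing Implicit Defensive.
Import Order.TTheory GRing.Theory Num.Theory.
Import numFieldNormedType.Exports.
Local Open Scope classical_set_scope.
Local Open Scope ring_scope.

Section Defs.
Variables (R : realType) (d : nat).
Notation V := 'rV[R]_d.

Definition dot (a x : V) : R := \sum_(i < d) a 0 i * x 0 i.

Definition concave_ext (phi : V -> \bar R) : Prop :=
  forall (x y : V) (l : R), 0 < l < 1 ->
    (l%:E * phi x + (1 - l)%:E * phi y <= phi (l *: x + (1 - l) *: y)%R)%E.

Definition usc_ext (phi : V -> \bar R) : Prop :=
  forall (x : V) (t : R), (phi x < t%:E)%E -> \forall y \near x, (phi y < t%:E)%E.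

Definition in_G (f : V -> R) : Prop :=
  exists phi : V -> \bar R,
    (forall x, phi x != +oo%E) /\ usc_ext phi /\ concave_ext phi /\
    (forall x, (f x)%:E = expeR (phi x)).

Definition supp (f : V -> R) : set V := [set x | f x != 0].

Definition log_k_affine (k : nat) (f : V -> R) : Prop :=
  exists E : 'I_k -> set V,
    (forall j, closed (E j)) /\ supp f = \bigcup_(j in setT) E j /\
    (forall j, exists (a : V) (b : R), forall x, E j x -> ln (f x) = dot a x + b).

Definition polyhedral (E : set V) : Prop :=
  exists (n : nat) (A : 'I_n -> V) (b : 'I_n -> R),
    (forall i, A i != 0) /\ E = [set x | forall i, dot (A i) x <= b i].

Definition aff_indep (n : nat) (p : 'I_n.+1 -> V) : Prop :=
  forall c : 'I_n -> R,
    \sum_(i < n) c i *: (p (lift ord0 i) - p ord0) = 0 -> forall i, c i = 0.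

Definition has_aff_indep (S : set V) (n : nat) : Prop :=
  exists p : 'I_n.+1 -> V, (forall i, S (p i)) /\ aff_indep p.

Definition affdim_is (S : set V) (n : nat) : Prop :=
  has_aff_indep S n /\ ~ has_aff_indep S n.+1.

Definition is_facet (E F : set V) : Prop :=
  exists (a : V) (b : R), a != 0 /\ (forall x, E x -> dot a x <= b) /\
    F = E `&` [set x | dot a x = b] /\
    exists n, affdim_is E n.+1 /\ affdim_is F n.

(* faces of a polyhedron (including E itself and the empty set) *)
Definition is_face (E F : set V) : Prop :=
  exists (a : V) (b : R), (forall x, E x -> dot a x <= b) /\
    F = E `&` [set x | dot a x = b].

Definition in_P (E : set V) : Prop := polyhedral E /\ interior E !=set0.

Definition in_Pm (m : nat) (E : set V) : Prop :=
  in_P E /\ exists Fs : 'I_m -> set V, forall F, is_facet E F -> exists i, F = Fs i.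

Definition subdivision (P : set V) (l : nat) (E : 'I_l -> set V) : Prop :=
  (forall j, in_P (E j)) /\ P = \bigcup_(j in setT) E j /\
  (forall i j, is_face (E i) (E i `&` E j) /\ is_face (E j) (E i `&` E j)).

Definition affine_rep (f : V -> R) (l : nat) (alpha : 'I_l -> V) (beta : 'I_l -> R)
    (E : 'I_l -> set V) : Prop :=
  subdivision (supp f) E /\
  (forall j x, E j x -> f x = expR (dot (alpha j) x + beta j)) /\
  (forall i j, i != j -> alpha i != alpha j).

End Defs.

(* Main.v *)
Require Import Defs.
From HB Require Import structures.
From mathcomp Require Import all_boot all_order all_algebra.
From mathcomp Require Import all_classical all_reals all_analysis.
From mathcomp Require Import ring lra zify.
From Stdlib Require Import Lia.
Import Order.TTheory GRing.Theory Num.Theory.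
Import numFieldNormedType.Exports.
Local Open Scope classical_set_scope.
Local Open Scope ring_scope.
Set Implicit Arguments. Unset Strict Implicit. Unset Printing Implicit Defensive.


Section P1.
Variables (R : realType) (d : nat).
Notation V := 'rV[R]_d.
Notation dot := (@dot R d).

Lemma dotDr (a x y : V) : dot a (x + y) = dot a x + dot a y.
Proof. by rewrite /Defs.dot -big_split /=; apply: eq_bigr => i _; rewrite mxE mulrDr. Qed.

Lemma dotZr (a x : V) (c : R) : dot a (c *: x) = c * dot a x.
Proof. by rewrite /Defs.dot mulr_sumr; apply: eq_bigr => i _; rewrite mxE mulrCA. Qed.

Lemma dotNr (a x : V) : dot a (- x) = - dot a x.
Proof. by rewrite -scaleN1r dotZr mulN1r. Qed.

Lemma dotBr (a x y : V) : dot a (x - y) = dot a x - dot a y.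
Proof. by rewrite dotDr dotNr. Qed.

Lemma dotDl (a b x : V) : dot (a + b) x = dot a x + dot b x.
Proof. by rewrite /Defs.dot -big_split /=; apply: eq_bigr => i _; rewrite mxE mulrDl. Qed.

Lemma dotZl (a x : V) (c : R) : dot (c *: a) x = c * dot a x.
Proof. by rewrite /Defs.dot mulr_sumr; apply: eq_bigr => i _; rewrite mxE mulrA. Qed.

Lemma dotNl (a x : V) : dot (- a) x = - dot a x.
Proof. by rewrite -scaleN1r dotZl mulN1r. Qed.

Lemma dotBl (a b x : V) : dot (a - b) x = dot a x - dot b x.
Proof. by rewrite dotDl dotNl. Qed.

Lemma dot0l (x : V) : dot 0 x = 0.
Proof. by rewrite /Defs.dot big1 // => i _; rewrite mxE mul0r. Qed.

Lemma dot0r (x : V) : dot x 0 = 0.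
Proof. by rewrite /Defs.dot big1 // => i _; rewrite mxE mulr0. Qed.

Lemma dot_sumr (a : V) n (F : 'I_n -> V) (w : 'I_n -> R) :
  dot a (\sum_(i < n) w i *: F i) = \sum_(i < n) w i * dot a (F i).
Proof.
elim: n F w => [|n IH] F w; first by rewrite !big_ord0 dot0r.
by rewrite !big_ord_recr /= dotDr IH dotZr.
Qed.

Lemma dot_delta (a : V) (i : 'I_d) : dot a (delta_mx 0 i) = a 0 i.
Proof.
rewrite /Defs.dot (bigD1 i) //= big1 ?addr0; first by rewrite mxE !eqxx mulr1.
by move=> j ji; rewrite mxE eqxx (negbTE ji) mulr0.
Qed.

Lemma dot_mx (a x : V) : dot a x = (x *m a^T) 0 0.
Proof. by rewrite mxE /Defs.dot; apply: eq_bigr => i _; rewrite mxE mulrC. Qed.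

Lemma dot_cont (a : V) : continuous (dot a).
Proof.
rewrite /Defs.dot.
have := @continuous_big R _ +%R 0 predT add_continuous V (index_enum 'I_d)
  (fun i (x : V) => a 0 i * x 0 i).
apply => i _ x.
have := @continuousM R V (fun _ => a 0 i) (fun y : V => y 0 i) x.
apply; first exact: cst_continuous.
exact: coord_continuous.
Qed.

End P1.


Lemma baire (T : topologicalType) n (F : nat -> set T) (W : set T) (w : T) :
  (forall j, closed (F j)) -> open W -> W w ->
  (forall y, W y -> exists2 j, (j < n)%N & F j y) ->
  exists j (x0 : T), (j < n)%N /\ nbhs x0 (W `&` F j).
Proof.
move=> Fc; elim: n W w => [|n IH] W w Wo Ww Hc.
  by have [j] := Hc w Ww.
case: (pselect (exists y, W y /\ ~ F n y)) => [[y [Wy nFy]]|nE].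
  have [|||j [x0 [jn Hx]]] := IH (W `&` ~` F n) y.
  - by apply: openI => //; exact: closed_openC.
  - by [].
  - move=> y' [Wy' nFy']; have [j jn Fj] := Hc y' Wy'.
    exists j => //; move: jn; rewrite ltnS leq_eqVlt => /orP[/eqP jE|//].
    by move: nFy'; rewrite -jE.
  exists j, x0; split; first by apply: ltnW.
  by apply: filterS Hx => z [[Wz _] Fz].
exists n, w; split => //.
rewrite openE in Wo; have := Wo w Ww; rewrite /interior => Hw.
apply: filterS Hw => z Wz; split => //.
by apply: contrapT => nF; apply: nE; exists z.
Qed.

Section P2.
Variables (R : realType) (d : nat).
Notation V := 'rV[R]_d.
Notation dot := (@dot R d).

Lemma near_pos (P : R -> Prop) : (\forall t \near (0:R), P t) ->
  exists t, 0 < t < 1 /\ P t.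
Proof.
move=> /nbhs_ballP [e /= e0 He].
exists (Num.min (e / 2) (1 / 2)); split.
  rewrite lt_min gt_min; apply/andP; split; first by apply/andP; split; lra.
  by apply/orP; right; lra.
apply: He; rewrite /ball /= sub0r normrN ger0_norm.
  by rewrite gt_min; apply/orP; left; lra.
by rewrite le_min; apply/andP; split; lra.
Qed.

Lemma line_near (x v : V) (U : set V) : nbhs x U ->
  \forall t \near (0:R), U (x + t *: v).
Proof.
move=> HU.
have H : (fun t : R => x + t *: v) @ (nbhs (0:R)) --> x + 0 *: v.
  apply: cvgD; first exact: cvg_cst.
  by apply: cvgZr_tmp; exact: cvg_id.
rewrite scale0r addr0 in H.
exact: H.
Qed.

Lemma aff_eq (x0 a a' : V) (b b' : R) :
  (\forall y \near x0, dot a y + b = dot a' y + b') -> a = a' /\ b = b'.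
Proof.
move=> H.
have Hx := nbhs_singleton H.
have Ha : a = a'.
  apply/rowP => i.
  have [t [/andP[t0 t1] Ht]] := near_pos (line_near (delta_mx 0 i) H).
  move: Ht; rewrite !dotDr !dotZr !dot_delta => Ht.
  have E : t * a 0 i = t * a' 0 i by lra.
  by apply: (mulfI (lt0r_neq0 t0)).
split => //; move: Hx; rewrite Ha; lra.
Qed.

End P2.


Section P3.
Variables (R : realType) (d : nat).
Notation V := 'rV[R]_d.
Notation dot := (@dot R d).

Definition cvx (P : set V) := forall x y (t : R), P x -> P y -> 0 <= t <= 1 ->
  P ((1 - t) *: x + t *: y).

Definition hp n (A : 'I_n -> V) (b : 'I_n -> R) : set V :=
  [set x | forall i, dot (A i) x <= b i].

Lemma hp_convex n (A : 'I_n -> V) b : cvx (hp A b).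
Proof.
move=> x y t Hx Hy /andP[t0 t1] i.
rewrite dotDr !dotZr.
have := Hx i; have := Hy i => h1 h2.
have h3 : (1 - t) * dot (A i) x <= (1 - t) * b i by apply: ler_wpM2l; lra.
have h4 : t * dot (A i) y <= t * b i by apply: ler_wpM2l.
lra.
Qed.

Lemma hp_closed n (A : 'I_n -> V) b : closed (hp A b).
Proof.
move=> x Hx i.
have Ci : closed [set y : V | dot (A i) y <= b i].
  have := (continuous_closedP (dot (A i))).1 (@dot_cont R d (A i)) _ (@closed_le R (b i)).
  by [].
apply: Ci; apply: (closureS _ Hx) => y Hy; exact: Hy.
Qed.

Lemma int_seg (P : set V) (x0 x : V) (t : R) : cvx P -> nbhs x0 P -> P x ->
  0 < t <= 1 -> nbhs ((1 - t) *: x + t *: x0) P.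
Proof.
move=> cP Hx0 Px /andP[t0 t1].
set g := fun w : V => t^-1 *: (w - (1 - t) *: x).
have gz : g ((1 - t) *: x + t *: x0) = x0.
  by rewrite /g [(1 - t) *: x + _]addrC addrK scalerA mulVf ?scale1r // lt0r_neq0.
have gc : g @ nbhs ((1 - t) *: x + t *: x0) --> g ((1 - t) *: x + t *: x0).
  apply: cvgZl_tmp; apply: cvgB; first exact: cvg_id.
  exact: cvg_cst.
rewrite gz in gc.
have H : nbhs ((1 - t) *: x + t *: x0) (g @^-1` P) by apply: gc.
apply: filterS H => w /= Pw.
have -> : w = (1 - t) *: x + t *: g w.
  by rewrite /g scalerA mulfV ?scale1r ?lt0r_neq0 // addrC subrK.
apply: cP => //; lra.
Qed.

Lemma near_int (P : set V) (x0 x : V) (U : set V) : cvx P -> nbhs x0 P -> P x ->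
  nbhs x U -> exists z, U z /\ nbhs z P.
Proof.
move=> cP Hx0 Px HU.
have [t [/andP[t0 t1] Ht]] := near_pos (line_near (x0 - x) HU).
exists (x + t *: (x0 - x)); split => //.
have -> : x + t *: (x0 - x) = (1 - t) *: x + t *: x0.
  by rewrite scalerBr scalerBl scale1r addrA addrAC.
by apply: int_seg => //; lra.
Qed.

Lemma closed_int_sub (P Q : set V) (x0 : V) : cvx P -> nbhs x0 P -> closed Q ->
  (forall z, nbhs z P -> Q z) -> P `<=` Q.
Proof.
move=> cP Hx0 cQ H x Px; apply: cQ => B HB.
have [z [Bz Hz]] := near_int cP Hx0 Px HB.
by exists z; split => //; apply: H.
Qed.

End P3.


Section P4.
Variables (R : realType) (d : nat).
Notation V := 'rV[R]_d.
Notation dot := (@dot R d).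

Lemma rank_bound n m (p : 'I_n.+1 -> V) (N : 'M[R]_(m, d)) :
  aff_indep p -> (forall i k, dot (row k N) (p (lift ord0 i) - p ord0) = 0) ->
  (n + \rank N <= d)%N.
Proof.
move=> Hp HN.
set M : 'M[R]_(n, d) := \matrix_(i, j) (p (lift ord0 i) - p ord0) 0 j.
have rowM i : row i M = p (lift ord0 i) - p ord0.
  by apply/rowP => j; rewrite !mxE.
have fM : row_free M.
  apply: inj_row_free => v Hv; apply/rowP => i; rewrite mxE.
  apply: Hp i; rewrite -[RHS]Hv mulmx_sum_row; apply: eq_bigr => l _.
  by rewrite rowM.
have MN : M *m N^T = 0.
  apply/matrixP => i k; rewrite !mxE.
  rewrite -[RHS](HN i k) /Defs.dot; apply: eq_bigr => j _.
  by rewrite !mxE mulrC.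
have := mxrankS (introT sub_kermxP MN); rewrite mxrank_ker mxrank_tr.
move/eqP: fM => ->.
have := rank_leq_col N.
lia.
Qed.

Lemma aff_top n (p : 'I_n.+1 -> V) : aff_indep p -> (n <= d)%N.
Proof.
move=> Hp; have := @rank_bound n 0 p 0 Hp.
by move=> H; have := H (fun i k => match k with @Ordinal _ _ F => False_ind _ (notF F) end); lia.
Qed.

Lemma rank_row_neq0 (a : V) : a != 0 -> \rank a = 1%N.
Proof.
move=> a0; have := rank_leq_row a; rewrite -mxrank_eq0 in a0; lia.
Qed.

Lemma aff_hyp n (p : 'I_n.+1 -> V) (a : V) (b : R) : aff_indep p -> a != 0 ->
  (forall i, dot a (p i) = b) -> (n < d)%N.
Proof.
move=> Hp a0 Ha.
have := @rank_bound n 1 p a Hp.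
rewrite rank_row_neq0 // addn1; apply => i k.
by rewrite (ord1 k) row_id dotBr !Ha subrr.
Qed.

Lemma aff_two n (p : 'I_n.+1 -> V) (a a' : V) (b b' : R) : aff_indep p -> n.+1 = d ->
  a != 0 -> a' != 0 ->
  (forall i, dot a (p i) = b) -> (forall i, dot a' (p i) = b') ->
  exists l : R, a = l *: a' /\ b = l * b'.
Proof.
move=> Hp nd a0 a'0 Ha Ha'.
set N : 'M[R]_(2, d) := \matrix_(i, j) (if i == ord0 then a 0 j else a' 0 j).
have rN0 : row ord0 N = a by apply/rowP => j; rewrite !mxE.
have rN1 : row ord_max N = a' by apply/rowP => j; rewrite !mxE.
have rk : (\rank N <= 1)%N.
  have := @rank_bound n 2 p N Hp.
  have H : forall i k, dot (row k N) (p (lift ord0 i) - p ord0) = 0.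
    move=> i k; have -> : row k N = if k == ord0 then a else a'.
      by apply/rowP => j; rewrite !mxE; case: (k == ord0).
    by case: (k == ord0); rewrite dotBr ?Ha ?Ha' subrr.
  move/(_ H); lia.
have kN : kermx N != 0.
  rewrite kermx_eq0 /row_free; apply/negP => /eqP; lia.
have [c [c0 cN]] : exists c : 'rV[R]_2, c != 0 /\ c *m N = 0.
  case: (pselect (exists i, row i (kermx N) != 0)) => [[i Hi]|nE].
    exists (row i (kermx N)); split => //.
    by rewrite -row_mul mulmx_ker row0.
  exfalso; move/negP: kN; apply; apply/eqP/row_matrixP => i.
  rewrite row0; apply/eqP; apply: contrapT => H; apply: nE; exists i; exact/negP.
move: cN; rewrite mulmx_sum_row !big_ord_recr big_ord0 /= add0r.
have -> : row (widen_ord (leqnSn 1) ord_max) N = a.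
  by rewrite -rN0; congr row; apply/val_inj.
rewrite rN1 => cN.
set c1 := c 0 (widen_ord (leqnSn 1) ord_max) in cN.
set c2 := c 0 ord_max in cN.
have c1n0 : c1 != 0.
  apply/negP => /eqP c10; move: cN; rewrite c10 scale0r add0r => /eqP.
  rewrite scaler_eq0 (negbTE a'0) orbF => /eqP c20.
  move/negP: c0; apply; apply/eqP/rowP => j; rewrite mxE.
  case: j => [[|[|j]] Hj] //.
  - by rewrite -c10 /c1; congr (c 0 _); apply/val_inj.
  - by rewrite -c20 /c2; congr (c 0 _); apply/val_inj.
have Ea : a = (- c2 / c1) *: a'.
  apply: (scalerI c1n0); rewrite scalerA mulrCA mulfV // mulr1 scaleNr.
  by apply/eqP; rewrite -subr_eq0 opprK; apply/eqP.
exists (- c2 / c1); split => //.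
by rewrite -(Ha ord0) -(Ha' ord0) Ea dotZl.
Qed.

End P4.


Section P5.
Variables (R : realType) (d : nat).
Notation V := 'rV[R]_d.
Notation dot := (@dot R d).

Lemma has_mono1 (S : set V) n : has_aff_indep S n.+1 -> has_aff_indep S n.
Proof.
move=> [p [Sp Hp]].
exists (fun i => p (widen_ord (leqnSn _) i)); split => // c Hc i.
pose c' := fun j : 'I_n.+1 => if unlift ord_max j is Some i then c i else 0.
have := Hp c'.
rewrite big_ord_recr /= /c' unlift_none scale0r addr0.
have E : forall i0 : 'I_n, unlift ord_max (widen_ord (leqnSn n) i0) = Some i0.
  move=> i0; have -> : widen_ord (leqnSn n) i0 = lift ord_max i0.
    apply/val_inj; exact: (esym (lift_max i0)).
  by rewrite liftK.
under eq_bigr => j _ do rewrite E.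
have -> : \sum_(i0 < n) c i0 *: (p (lift ord0 (widen_ord (leqnSn n) i0)) - p ord0) =
          \sum_(i0 < n) c i0 *: (p (widen_ord (leqnSn n.+1) (lift ord0 i0)) -
             p (widen_ord (leqnSn n.+1) ord0)).
  apply: eq_bigr => j _; congr (_ *: (p _ - p _)); exact/val_inj.
move/(_ Hc (widen_ord (leqnSn n) i)).
by rewrite E.
Qed.

Lemma has_mono (S : set V) n m : has_aff_indep S m -> (n <= m)%N -> has_aff_indep S n.
Proof.
move=> H nm; move: H; have -> : m = (n + (m - n))%N by lia.
elim: (m - n)%N => [|k IH]; first by rewrite addn0.
by rewrite addnS => /has_mono1.
Qed.

Lemma dot_self_gt0 (a : V) : a != 0 -> 0 < dot a a.
Proof.
move=> a0; rewrite lt_def; apply/andP; split; last first.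
  by apply: sumr_ge0 => i _; rewrite -expr2 sqr_ge0.
apply/negP => /eqP H; move/negP: a0; apply; apply/eqP/rowP => i.
have Hge : forall j : 'I_d, predT j -> 0 <= a 0 j * a 0 j.
  by move=> j _; rewrite -expr2 sqr_ge0.
have := @psumr_eq0P R 'I_d predT (fun i => a 0 i * a 0 i) Hge H i isT.
by move=> /eqP; rewrite mulf_eq0 orbb mxE => /eqP.
Qed.

Lemma near_dot_lt (a z : V) (c : R) : dot a z < c -> \forall x \near z, dot a x < c.
Proof.
move=> H; have Ho := @open_lt R c; rewrite openE in Ho.
have Hn : nbhs (dot a z) [set y : R | y < c] by exact: (Ho _ H).
have H2 : nbhs z (dot a @^-1` [set y : R | y < c]) by apply: (@dot_cont R d a z).
exact: H2.
Qed.

Lemma int_has (S : set V) (x0 : V) : nbhs x0 S -> has_aff_indep S d.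
Proof.
move=> H.
have H2 : \forall t \near (0:R), forall i : 'I_d, S (x0 + t *: delta_mx 0 i).
  apply: (@filter_forall R 'I_d (fun i t => S (x0 + t *: delta_mx 0 i)) (nbhs (0:R))) => i.
  exact: (line_near (delta_mx 0 i) H).
have [t [/andP[t0 t1] Ht]] := near_pos H2.
exists (fun j => if unlift ord0 j is Some i then x0 + t *: delta_mx 0 i else x0).
split.
  by move=> j; case: (unlift ord0 j) => [i|]; [apply: Ht | apply: nbhs_singleton].
move=> c Hc i.
move: Hc; rewrite unlift_none.
under eq_bigr => j _ do rewrite liftK addrAC subrr add0r scalerA.
move=> /rowP /(_ i); rewrite mxE summxE (bigD1 i) //= big1.
  rewrite !mxE !eqxx mulr1 addr0 => /eqP; rewrite mulf_eq0 => /orP[/eqP //| /eqP t00].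
  by move: t0; rewrite t00 ltxx.
by move=> j ji; rewrite !mxE eqxx eq_sym (negbTE ji) mulr0.
Qed.

Lemma affdim_le (S : set V) n m : affdim_is S n -> has_aff_indep S m -> (m <= n)%N.
Proof.
move=> [_ Hn] Hm; rewrite leqNgt; apply/negP => mn; apply: Hn.
exact: has_mono Hm mn.
Qed.

End P5.


Section P6.
Variables (R : realType) (d : nat).
Notation V := 'rV[R]_d.
Notation dot := (@dot R d).

Lemma avg_const N (C : R) : \sum_(s < N.+1) (N.+1%:R)^-1 * C = C.
Proof.
rewrite -mulr_sumr sumr_const card_ord -[C *+ _]mulr_natr mulrCA mulVf ?mulr1 //.
Qed.

Lemma avg_lt N (y : 'I_N.+1 -> R) (C : R) s0 : (forall s, y s <= C) -> y s0 < C ->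
  \sum_(s < N.+1) (N.+1%:R)^-1 * y s < C.
Proof.
move=> Hle Hlt.
rewrite -[X in _ < X](avg_const N C) (bigD1 s0) //= [X in _ < X](bigD1 s0) //=.
have w0 : 0 < (N.+1%:R : R)^-1 by rewrite invr_gt0 ltr0n.
apply: ltr_leD; first by rewrite ltr_pM2l.
by apply: ler_sum => s _; rewrite ler_pM2l.
Qed.

Lemma facet_hp N (A : 'I_N -> V) (c : 'I_N -> R) (x0 : V) (F : set V) :
  (forall r, A r != 0) -> nbhs x0 (hp A c) -> is_facet (hp A c) F ->
  exists r, F = hp A c `&` [set x | dot (A r) x = c r] /\ (0 < d)%N /\
    has_aff_indep F d.-1.
Proof.
move=> HA Hx0 [a [b [a0 [Hab [FE [n [[hPn nPn] [hFn nFn]]]]]]]].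
have dn : (d <= n.+1)%N := affdim_le (conj hPn nPn) (int_has Hx0).
have [p [Fp Hp]] := hFn.
have Fsub : forall x, F x -> hp A c x /\ dot a x = b by rewrite FE.
have nd : (n < d)%N := aff_hyp Hp a0 (fun i => (Fsub _ (Fp i)).2).
have [r Hr] : exists r, forall x, F x -> dot (A r) x = c r.
  apply: contrapT => nE.
  have Hq : forall r, exists q, F q /\ dot (A r) q < c r.
    move=> r; apply: contrapT => nq; apply: nE; exists r => x Fx.
    have := (Fsub _ Fx).1 r; rewrite le_eqVlt => /orP[/eqP //|lt].
    by exfalso; apply: nq; exists x.
  have [q Hq'] := choice Hq.
  pose Q := fun s : 'I_N.+1 => if unlift ord0 s is Some r then q r else p ord0.
  have FQ : forall s, F (Q s).
    by move=> s; rewrite /Q; case: (unlift ord0 s) => [r|]; [exact: (Hq' r).1 | exact: Fp].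
  pose w : R := (N.+1%:R)^-1.
  pose z := \sum_(s < N.+1) w *: Q s.
  have za : dot a z = b.
    rewrite /z dot_sumr -[RHS](avg_const N b); apply: eq_bigr => s _.
    by rewrite (Fsub _ (FQ s)).2.
  have zP : \forall x \near z, hp A c x.
    apply: (@filter_forall V 'I_N (fun r x => dot (A r) x <= c r) (nbhs z)) => r0.
    have : dot (A r0) z < c r0.
      rewrite /z dot_sumr; apply: (@avg_lt N _ _ (lift ord0 r0)).
        by move=> s; exact: ((Fsub _ (FQ s)).1 r0).
      by rewrite /Q liftK; exact: (Hq' r0).2.
    move/near_dot_lt; apply: filterS => x; exact: ltW.
  have [t [/andP[t0 t1] Ht]] := near_pos (line_near a zP).
  have := Hab _ Ht; rewrite dotDr dotZr za.
  have := mulr_gt0 t0 (dot_self_gt0 a0); lra.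
have nd' : n.+1 = d by lia.
have [l [al bl]] := aff_two Hp nd' a0 (HA r) (fun i => (Fsub _ (Fp i)).2) (fun i => Hr _ (Fp i)).
have l0 : l != 0.
  by apply/negP => /eqP l0; move: a0; rewrite al l0 scale0r eqxx.
exists r; split; last by split; [lia | have -> : d.-1 = n by lia].
rewrite FE; apply/seteqP; split => x [Px Hx]; split => //=.
  move: Hx; rewrite /= al bl dotZl => /eqP; rewrite -subr_eq0 -mulrBr mulf_eq0 (negbTE l0) /=.
  by rewrite subr_eq0 => /eqP.
by rewrite al bl dotZl Hx.
Qed.

End P6.


Lemma baire_ord (T : topologicalType) n (F : 'I_n -> set T) (W : set T) (w : T) :
  (forall j, closed (F j)) -> open W -> W w ->
  (forall y, W y -> exists j, F j y) ->
  exists j (x0 : T), nbhs x0 (W `&` F j).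
Proof.
move=> Fc Wo Ww Hc.
pose G := fun j : nat => if insub j is Some j0 then F j0 else set0.
have [||||j [x0 [jn H]]] := @baire T n G W w.
- by move=> j; rewrite /G; case: insub => [j0|]; [exact: Fc | exact: closed0].
- by [].
- by [].
- move=> y /Hc [j Fj]; exists (val j); first exact: ltn_ord.
  by rewrite /G valK.
exists (Ordinal jn), x0; move: H; rewrite /G.
by rewrite (insubT (fun j => (j < n)%N) jn).
Qed.

Section Main.
Variables (R : realType) (d : nat).
Notation V := 'rV[R]_d.
Notation dot := (@dot R d).
Variables (f : V -> R) (phi : V -> \bar R).
Hypothesis phinoo : forall x, phi x != +oo%E.
Hypothesis phiusc : usc_ext phi.
Hypothesis phiconc : concave_ext phi.
Hypothesis fphi : forall x, (f x)%:E = expeR (phi x).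
Variables (N : nat) (A : 'I_N -> V) (c : 'I_N -> R) (xi : V).
Hypothesis HA : forall r, A r != 0.
Hypothesis suppE : supp f = hp A c.
Hypothesis Hxi : nbhs xi (supp f).

Lemma f_ge0 x : 0 <= f x.
Proof. by rewrite -lee_fin fphi expeR_ge0. Qed.

Lemma f_pos x : supp f x -> 0 < f x.
Proof. by move=> /= fx; rewrite lt_def fx f_ge0. Qed.

Lemma phi_supp x : supp f x -> phi x = (ln (f x))%:E.
Proof.
move=> /= fx; have := fphi x; have := phinoo x.
case: (phi x) => [r| |] //= _.
  by move=> [->]; rewrite expRK.
by move=> [] f0; move: fx; rewrite /supp /= f0 eqxx.
Qed.

Lemma f_exp x : supp f x -> f x = expR (ln (f x)).
Proof. by move=> /f_pos fx; rewrite lnK // posrE. Qed.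

Lemma supp_convex : cvx (supp f).
Proof. by rewrite suppE; exact: hp_convex. Qed.

Definition good (a : V) (b : R) (x0 : V) :=
  \forall y \near x0, supp f y /\ ln (f y) = dot a y + b.

Lemma tangent a b x0 : good a b x0 -> forall x, supp f x -> ln (f x) <= dot a x + b.
Proof.
move=> G x Sx.
have [t [/andP[t0 t1] [Sz Hz]]] := near_pos (line_near (x - x0) G).
have [Sx0 Hx0] := nbhs_singleton G.
have := phiconc x x0 (l := t); rewrite t0 t1 => /(_ isT).
have -> : t *: x + (1 - t) *: x0 = x0 + t *: (x - x0).
  by rewrite scalerBr scalerBl scale1r addrCA addrA addrAC.
rewrite (phi_supp Sx) (phi_supp Sx0) (phi_supp Sz) -!EFinM -EFinD lee_fin Hz Hx0.
rewrite dotDr dotZr dotBr => H.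
have H2 : t * ln (f x) <= t * (dot a x + b) by lra.
by rewrite ler_pM2l in H2.
Qed.

Lemma same_b a b b' x0 x1 : good a b x0 -> good a b' x1 -> b = b'.
Proof.
move=> G0 G1.
have [S0 H0] := nbhs_singleton G0; have [S1 H1] := nbhs_singleton G1.
have := tangent G1 S0; have := tangent G0 S1; lra.
Qed.

End Main.


Section Main2.
Variables (R : realType) (d : nat).
Notation V := 'rV[R]_d.
Notation dot := (@dot R d).
Variables (f : V -> R) (phi : V -> \bar R).
Hypothesis phinoo : forall x, phi x != +oo%E.
Hypothesis phiusc : usc_ext phi.
Hypothesis phiconc : concave_ext phi.
Hypothesis fphi : forall x, (f x)%:E = expeR (phi x).
Variables (N : nat) (A : 'I_N -> V) (c : 'I_N -> R) (xi : V).
Hypothesis HA : forall r, A r != 0.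
Hypothesis suppE : supp f = hp A c.
Hypothesis Hxi : nbhs xi (supp f).
Variables (k : nat) (E0 : 'I_k -> set V) (a0 : 'I_k -> V) (b0 : 'I_k -> R).
Hypothesis E0c : forall j, closed (E0 j).
Hypothesis E0cov : supp f = \bigcup_(j in setT) E0 j.
Hypothesis E0aff : forall j x, E0 j x -> ln (f x) = dot (a0 j) x + b0 j.

Notation tg := (tangent phinoo phiconc fphi).
Notation phis := (phi_supp phinoo fphi).

Definition Jp j := exists x0, good f (a0 j) (b0 j) x0.
Definition Jr j := Jp j /\ forall j' : 'I_k, (j' < j)%N -> Jp j' -> a0 j' != a0 j.

Lemma rep_aux n : forall j : 'I_k, val j = n -> Jp j ->
  exists j', Jr j' /\ a0 j' = a0 j.
Proof.
elim/ltn_ind: n => n IH j jn Jj.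
case: (pselect (forall j' : 'I_k, (j' < j)%N -> Jp j' -> a0 j' != a0 j)) => H.
  by exists j.
have [j' [lt [Jj' e]]] : exists j' : 'I_k, (j' < j)%N /\ Jp j' /\ a0 j' = a0 j.
  apply: contrapT => nE; apply: H => j' lt Jj'; apply/negP => /eqP e.
  by apply: nE; exists j'.
have lt' : (val j' < n)%N by rewrite -jn.
have [j'' [Jr'' e'']] := IH (val j') lt' j' erefl Jj'.
by exists j''; split => //; rewrite e'' e.
Qed.

Lemma rep j : Jp j -> exists j', Jr j' /\ a0 j' = a0 j /\ b0 j' = b0 j.
Proof.
move=> Jj; have [j' [[Jj' H] e]] := rep_aux erefl Jj.
exists j'; split => //; split => //.
have [x0 G0] := Jj; have [x1 G1] := Jj'.
by rewrite e in G1; exact: (same_b phinoo phiconc fphi G1 G0).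
Qed.

Lemma good_E0 j x0 : nbhs x0 (E0 j) -> good f (a0 j) (b0 j) x0.
Proof.
move=> H; apply: filterS H => y Ey; split; last exact: E0aff.
by rewrite E0cov; exists j.
Qed.

Lemma main_eq x : supp f x -> exists j, Jp j /\ ln (f x) = dot (a0 j) x + b0 j.
Proof.
move=> Sx; apply: contrapT => nE.
have Hlt : forall j, Jp j -> ln (f x) < dot (a0 j) x + b0 j.
  move=> j [x0 G]; rewrite lt_def (tg G Sx) andbT.
  by apply/negP => /eqP e; apply: nE; exists j; split => //; exists x0.
pose P := fun y => forall j, Jp j -> (phi y < (dot (a0 j) y + b0 j)%:E)%E.
have HP : \forall y \near x, P y.
  apply: (@filter_forall V 'I_k (fun j y => Jp j -> (phi y < (dot (a0 j) y + b0 j)%:E)%E) (nbhs x)) => j.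
  case: (pselect (Jp j)) => Jj; last by apply: nearW.
  have lj := Hlt j Jj.
  set del := dot (a0 j) x + b0 j - ln (f x).
  have H1 : \forall y \near x, (phi y < (ln (f x) + del / 2)%:E)%E.
    by apply: phiusc; rewrite (phis Sx) lte_fin /del; lra.
  have H2 : \forall y \near x, dot (- a0 j) y < - (dot (a0 j) x - del / 2).
    by apply: near_dot_lt; rewrite dotNl /del; lra.
  apply: filterS2 H1 H2 => y h1 h2 _.
  apply: (lt_trans h1); rewrite lte_fin; move: h2; rewrite dotNl /del; lra.
have [z [Uz Sz]] := near_int (supp_convex suppE) Hxi Sx (nbhs_interior HP).
pose W := (P `&` supp f)°.
have Wz : W z by apply: filterI.
have [j [x1 H]] := @baire_ord _ k E0 W z E0c (@open_interior _ _) Wz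
  (fun y Wy => match (eq_ind _ (fun S => S y) (nbhs_singleton Wy).2 _ E0cov) with
               | ex_intro2 j _ Ej => ex_intro _ j Ej end).
have G : good f (a0 j) (b0 j) x1 by apply: good_E0; apply: filterS H => y [].
have [Wx1 E1] := nbhs_singleton H.
have [Px1 Sx1] := nbhs_singleton Wx1.
have := Px1 j (ex_intro _ x1 G).
by rewrite (phis Sx1) (nbhs_singleton G).2 lte_fin ltxx.
Qed.

End Main2.


Section Main3.
Variables (R : realType) (d : nat).
Notation V := 'rV[R]_d.
Notation dot := (@dot R d).
Variables (f : V -> R) (phi : V -> \bar R).
Hypothesis phinoo : forall x, phi x != +oo%E.
Hypothesis phiusc : usc_ext phi.
Hypothesis phiconc : concave_ext phi.
Hypothesis fphi : forall x, (f x)%:E = expeR (phi x).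
Variables (N : nat) (A : 'I_N -> V) (c : 'I_N -> R) (xi : V).
Hypothesis HA : forall r, A r != 0.
Hypothesis suppE : supp f = hp A c.
Hypothesis Hxi : nbhs xi (supp f).
Variables (k : nat) (E0 : 'I_k -> set V) (a0 : 'I_k -> V) (b0 : 'I_k -> R).
Hypothesis E0c : forall j, closed (E0 j).
Hypothesis E0cov : supp f = \bigcup_(j in setT) E0 j.
Hypothesis E0aff : forall j x, E0 j x -> ln (f x) = dot (a0 j) x + b0 j.

Notation tg := (tangent phinoo phiconc fphi).
Notation phis := (phi_supp phinoo fphi).
Notation mainE := (main_eq phinoo phiusc phiconc fphi suppE Hxi E0c E0cov E0aff).
Notation repE := (rep phinoo phiconc fphi).

Definition Jset := [set j : 'I_k | `[< Jr f a0 b0 j >]].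
Definition kap := #|Jset|.
Definition ind (i : 'I_kap) : 'I_k := @enum_val _ (mem Jset) i.
Definition alpha i := a0 (ind i).
Definition beta i := b0 (ind i).
Definition ell i x := dot (alpha i) x + beta i.
Definition Ecell i := [set x | supp f x /\ forall l : 'I_kap, ell i x <= ell l x].

Lemma ind_J i : Jr f a0 b0 (ind i).
Proof. by have := enum_valP i; rewrite inE => /asboolP. Qed.

Lemma goodI i : exists x0, good f (alpha i) (beta i) x0.
Proof. exact: (ind_J i).1. Qed.

Lemma tgI i x : supp f x -> ln (f x) <= ell i x.
Proof. by move=> Sx; have [x0 G] := goodI i; exact: tg G x Sx. Qed.

Lemma mainI x : supp f x -> exists i, ln (f x) = ell i x.
Proof.
move=> Sx; have [j [Jj E]] := mainE Sx.
have [j' [Jj' [ea eb]]] := repE Jj.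
have Hj' : j' \in Jset by rewrite inE; exact/asboolP.
exists (enum_rank_in Hj' j').
by rewrite /ell /alpha /beta /ind enum_rankK_in // ea eb.
Qed.

Lemma alpha_inj i i' : alpha i = alpha i' -> i = i'.
Proof.
move=> e; apply: (@enum_val_inj _ (mem Jset)); rewrite -/(ind i) -/(ind i').
case: (ltngtP (ind i) (ind i')) => [lt|lt|/val_inj //].
  by have := (ind_J i').2 _ lt (ind_J i).1; rewrite -/(alpha i) -/(alpha i') e eqxx.
by have := (ind_J i).2 _ lt (ind_J i').1; rewrite -/(alpha i) -/(alpha i') e eqxx.
Qed.

Lemma Ecell_eq i x : Ecell i x <-> supp f x /\ ln (f x) = ell i x.
Proof.
split.
  move=> [Sx H]; split => //; have [l El] := mainI Sx.
  by apply/eqP; rewrite eq_le tgI //= El H.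
move=> [Sx E]; split => // l; rewrite -E; exact: tgI.
Qed.

Definition A' (i : 'I_kap) (r : 'I_(N + kap.-1)) : V :=
  match fintype.split r with inl s => A s | inr j => alpha i - alpha (lift i j) end.
Definition c' (i : 'I_kap) (r : 'I_(N + kap.-1)) : R :=
  match fintype.split r with inl s => c s | inr j => beta (lift i j) - beta i end.

Lemma A'_nz i r : A' i r != 0.
Proof.
rewrite /A'; case: (fintype.split r) => [s|j]; first exact: HA.
rewrite subr_eq0; apply/negP => /eqP /alpha_inj e.
by move: (neq_lift i j); rewrite -e eqxx.
Qed.

Lemma Ecell_hp i : Ecell i = hp (A' i) (c' i).
Proof.
apply/seteqP; split => x.
  move=> [Sx H] r; rewrite /A' /c'; case: (fintype.split r) => [s|j].
    by move: Sx; rewrite suppE; apply.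
  by have := H (lift i j); rewrite /ell dotBl; lra.
move=> H; split.
  rewrite suppE => s; have := H (unsplit (inl s)).
  by rewrite /A' /c' unsplitK.
move=> l; case: (eqVneq i l) => [<-|il]; first by rewrite lexx.
have [j -> _] := unlift_some il.
have := H (unsplit (inr j)); rewrite /A' /c' unsplitK /ell dotBl; lra.
Qed.

Lemma Ecell_int i : exists x0 : V, nbhs x0 (Ecell i).
Proof.
have [x0 G] := goodI i; exists x0.
by apply: filterS G => y [Sy Ey]; apply/Ecell_eq.
Qed.

Lemma Ecell_P i : in_P (Ecell i).
Proof.
split; first by exists (N + kap.-1)%N, (A' i), (c' i); split; [exact: A'_nz | exact: Ecell_hp].
by have [x0 H] := Ecell_int i; exists x0.
Qed.

Lemma Ecell_cover : supp f = \bigcup_(i in setT) Ecell i.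
Proof.
apply/seteqP; split => x.
  by move=> Sx; have [i Ei] := mainI Sx; exists i => //; apply/Ecell_eq.
by move=> [i _ [Sx _]].
Qed.

Lemma Ecell_face i j : is_face (Ecell i) (Ecell i `&` Ecell j).
Proof.
exists (alpha i - alpha j), (beta j - beta i); split.
  by move=> x [Sx H]; have := H j; rewrite /ell dotBl; lra.
apply/seteqP; split => x.
  move=> [[Sx Hi] [_ Hj]]; split; first by split.
  by have := Hi j; have := Hj i; rewrite /= /ell dotBl; lra.
move=> [[Sx Hi] /= e]; split; first by split.
split => // l; have := Hi l; move: e; rewrite /ell dotBl; lra.
Qed.

Lemma Ecell_f i x : Ecell i x -> f x = expR (dot (alpha i) x + beta i).
Proof. by move=> /Ecell_eq [Sx E]; rewrite (f_exp fphi Sx) E. Qed.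

Lemma alpha_neq i j : i != j -> alpha i != alpha j.
Proof. by move=> ij; apply/negP => /eqP /alpha_inj e; move: ij; rewrite e eqxx. Qed.

Lemma rep_affine : affine_rep f alpha beta Ecell.
Proof.
split; last by split; [exact: Ecell_f | exact: alpha_neq].
split; first exact: Ecell_P.
split; first exact: Ecell_cover.
move=> i j; split; first exact: Ecell_face.
by rewrite setIC; exact: Ecell_face.
Qed.

Lemma kap_le : (kap <= k)%N.
Proof. by rewrite /kap; have := max_card (mem Jset); rewrite card_ord. Qed.

Lemma Ecell_closed i : closed (Ecell i).
Proof. by rewrite Ecell_hp; exact: hp_closed. Qed.

Lemma Ecell_cvx i : cvx (Ecell i).
Proof. by rewrite Ecell_hp; exact: hp_convex. Qed.

Lemma unique_rep kap' (alpha' : 'I_kap' -> V) (beta' : 'I_kap' -> R) (E' : 'I_kap' -> set V) :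
  affine_rep f alpha' beta' E' ->
  exists h : 'I_kap -> 'I_kap', bijective h /\
    forall j, alpha' (h j) = alpha j /\ beta' (h j) = beta j /\ E' (h j) = Ecell j.
Proof.
move=> [[EP [Ecov Eface]] [Ef Edist]].
have Esub j : E' j `<=` supp f by move=> x Ex; rewrite Ecov; exists j.
have Eln j x : E' j x -> ln (f x) = dot (alpha' j) x + beta' j.
  by move=> Ex; rewrite (Ef j x Ex) expRK.
have Eclosed j : closed (E' j).
  by have [[n [A2 [b2 [_ ->]]]] _] := EP j; exact: (@hp_closed R d n A2 b2).
have HA1 : forall i, exists j, alpha' j = alpha i /\ beta' j = beta i.
  move=> i; have [x0 H0] := Ecell_int i.
  have [j [x2 H]] := @baire_ord _ kap' E' (Ecell i)° x0 Eclosed (@open_interior _ _) H0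
    (fun y Wy => match (eq_ind _ (fun S => S y) (nbhs_singleton Wy).1 _ Ecov) with
               | ex_intro2 j _ Ej => ex_intro _ j Ej end).
  exists j.
  have H2 : \forall y \near x2, dot (alpha' j) y + beta' j = dot (alpha i) y + beta i.
    apply: filterS H => y [Wy Ey].
    have [_ Ei] := (Ecell_eq i y).1 (nbhs_singleton Wy).
    by rewrite -(Eln j y Ey) Ei.
  exact: aff_eq H2.
have HB1 : forall j, exists i, alpha i = alpha' j /\ beta i = beta' j.
  move=> j; have [_ [x0 H0]] := EP j.
  have [i [x2 H]] := @baire_ord _ kap Ecell (E' j)° x0 Ecell_closed (@open_interior _ _) H0
    (fun y Wy => match (eq_ind _ (fun S => S y) (Esub j y (nbhs_singleton Wy)) _ Ecell_cover) with
               | ex_intro2 j _ Ej => ex_intro _ j Ej end).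
  exists i.
  have H2 : \forall y \near x2, dot (alpha i) y + beta i = dot (alpha' j) y + beta' j.
    apply: filterS H => y [Wy Ey].
    have [_ Ei] := (Ecell_eq i y).1 Ey.
    by rewrite -(Eln j y (nbhs_singleton Wy)) Ei.
  exact: aff_eq H2.
have [h Hh] := choice HA1.
have [g Hg] := choice HB1.
have hg : cancel h g.
  by move=> i; apply: alpha_inj; rewrite (Hg (h i)).1 (Hh i).1.
have gh : cancel g h.
  move=> j; apply/eqP; apply: contraT => ne; have := Edist _ _ ne.
  by rewrite (Hh (g j)).1 (Hg j).1 eqxx.
exists h; split; first by exists g.
move=> i; split; first exact: (Hh i).1.
split; first exact: (Hh i).2.
apply/seteqP; split.
  move=> x Ex; apply/Ecell_eq; split; first exact: Esub Ex.
  by rewrite (Eln _ _ Ex) (Hh i).1 (Hh i).2.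
have [x0 H0] := Ecell_int i.
apply: (closed_int_sub (Ecell_cvx (i:=i)) H0 (Eclosed (h i))) => z Hz.
apply: contrapT => nz.
pose W := (Ecell i)° `&` ~` E' (h i).
have Wo : open W by apply: openI; [exact: open_interior | exact: closed_openC].
have Wz : W z by split.
pose H := fun l => if l == h i then set0
  else [set y | dot (alpha' l - alpha i) y = beta i - beta' l].
have Hc : forall l, closed (H l).
  move=> l; rewrite /H; case: (l == h i); first exact: closed0.
  by have := (continuous_closedP (dot (alpha' l - alpha i))).1 (@dot_cont R d _) _ (@closed_eq R (beta i - beta' l)).
have cov : forall y, W y -> exists l, H l y.
  move=> y [Wy nEy]; have Ey := nbhs_singleton Wy.
  have [_ Ei] := (Ecell_eq i y).1 Ey.
  have := (Ecell_eq i y).1 Ey => [[Sy _]].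
  rewrite Ecov in Sy; have [l _ El] := Sy.
  exists l; rewrite /H; case: eqP => [e|_]; first by rewrite e in El.
  by move: (Eln l y El); rewrite Ei /ell /= dotBl; lra.
have [l [x3 Hx3]] := baire_ord Hc Wo Wz cov.
move: Hx3; rewrite /H; case: eqP => [_ /nbhs_singleton [] //|/eqP ne Hx3].
have H2 : \forall y \near x3, dot (alpha' l - alpha i) y + 0 = dot 0 y + (beta i - beta' l).
  by apply: filterS Hx3 => y [_ /= ->]; rewrite dot0l addr0 add0r.
have [e _] := aff_eq H2.
by have := Edist _ _ ne; rewrite (Hh i).1; move/eqP: e; rewrite subr_eq0 => ->.
Qed.

Lemma has_sub (S T : set V) n : has_aff_indep S n -> S `<=` T -> has_aff_indep T n.
Proof. by move=> [p [Sp Hp]] ST; exists p; split => // j; apply: ST. Qed.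

Lemma insub_ord n (t : nat) (H : (t < n)%N) : insub t = Some (Ordinal H).
Proof. by rewrite insubT. Qed.

Lemma insub_none n (t : nat) : (n <= t)%N -> insub t = None :> option 'I_n.
Proof. by move=> H; rewrite insubF // ltnNge H. Qed.

Lemma Ecell_facets m : in_Pm m (supp f) -> forall i, in_Pm (k + m).-1 (Ecell i).
Proof.
move=> [_ [Fs HFs]] i; split; first exact: Ecell_P.
have [x0 H0] := Ecell_int i.
have kpos : (0 < kap)%N by apply: (leq_ltn_trans (leq0n i) (ltn_ord i)).
have kk := kap_le.
pose Fs' := fun t : 'I_(k + m).-1 =>
  if insub (val t) : option 'I_m is Some s then Ecell i `&` Fs s
  else if insub (val t - m)%N : option 'I_kap.-1 is Some j then
    Ecell i `&` [set x | dot (alpha i - alpha (lift i j)) x = beta (lift i j) - beta i]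
  else set0.
exists Fs' => F HF.
have H0' := H0; rewrite Ecell_hp in H0'.
have HF' := HF; rewrite Ecell_hp in HF'.
have [r [FE [d0 hF]]] := facet_hp (@A'_nz i) H0' HF'.
rewrite -Ecell_hp in FE.
case E: (fintype.split r) => [s|j].
  have AE : A' i r = A s by rewrite /A' E.
  have CE : c' i r = c s by rewrite /c' E.
  rewrite AE CE in FE.
  pose G := supp f `&` [set x | dot (A s) x = c s].
  have GF : is_facet (supp f) G.
    exists (A s), (c s); split; first exact: HA.
    split; first by rewrite suppE => x Hx; exact: Hx.
    split => //; exists d.-1; split.
      rewrite prednK //; split; first exact: int_has Hxi.
      by move=> [p [_ Hp]]; have := aff_top Hp; rewrite ltnn.
    split.
      move: hF; rewrite FE => hF; apply: (has_sub hF) => x [[Sx _] Hx]; by split.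
    move=> [p [Gp Hp]]; have := aff_hyp Hp (HA s) (fun j => (Gp j).2).
    by rewrite prednK // ltnn.
  have [t Ht] := HFs G GF.
  have tlt : (t < (k + m).-1)%N by have := ltn_ord t; lia.
  exists (Ordinal tlt); rewrite /Fs' /= (insub_ord (ltn_ord t)).
  have -> : Ordinal (ltn_ord t) = t by apply: val_inj.
  rewrite -Ht FE; apply/seteqP; split => x.
    by move=> [Ex Hx]; split => //; split => //; case: Ex.
  by move=> [Ex [_ Hx]].
have AE : A' i r = alpha i - alpha (lift i j) by rewrite /A' E.
have CE : c' i r = beta (lift i j) - beta i by rewrite /c' E.
rewrite AE CE in FE.
have tlt : (m + j < (k + m).-1)%N by have := ltn_ord j; lia.
exists (Ordinal tlt); rewrite /Fs' /= insub_none; last by apply: leq_addr.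
rewrite addKn (insub_ord (ltn_ord j)).
by have -> : Ordinal (ltn_ord j) = j by apply: val_inj.
Qed.

End Main3.


Unset Implicit Arguments. Set Strict Implicit.

Theorem proposition1 (R : realType) (d k : nat) (f : 'rV[R]_d -> R) :
  in_G f -> log_k_affine k f -> in_P (supp f) ->
  exists (kap : nat) (alpha : 'I_kap -> 'rV[R]_d) (beta : 'I_kap -> R)
         (E : 'I_kap -> set 'rV[R]_d),
    (kap <= k)%N /\ affine_rep f alpha beta E /\
    (forall (kap' : nat) (alpha' : 'I_kap' -> 'rV[R]_d) (beta' : 'I_kap' -> R)
            (E' : 'I_kap' -> set 'rV[R]_d),
        affine_rep f alpha' beta' E' ->
        exists h : 'I_kap -> 'I_kap', bijective h /\
          forall j, alpha' (h j) = alpha j /\ beta' (h j) = beta j /\ E' (h j) = E j) /\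
    (forall m : nat, in_Pm m (supp f) -> forall j, in_Pm (k + m).-1 (E j)).
Proof.
move=> [phi [phinoo [phiusc [phiconc fphi]]]] [E0 [E0c [E0cov E0aff]]]
  [[N [A [c [HA suppE]]]] [xi Hxi]].
have H : forall j, exists p : 'rV[R]_d * R, forall x, E0 j x -> ln (f x) = dot p.1 x + p.2.
  by move=> j; have [a [b H]] := E0aff j; exists (a, b).
have [ab Hab] := choice H.
pose a0 := fun j => (ab j).1.
pose b0 := fun j => (ab j).2.
have E0aff' : forall j x, E0 j x -> ln (f x) = dot (a0 j) x + b0 j.
  by move=> j x; exact: Hab.
exists (kap f a0 b0), (@alpha R d f k a0 b0), (@beta R d f k a0 b0), (@Ecell R d f k a0 b0).
split; first exact: kap_le.
split; first exact: (rep_affine phinoo phiusc phiconc fphi HA suppE Hxi E0c E0cov E0aff').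
split; first exact: (unique_rep phinoo phiusc phiconc fphi suppE Hxi E0c E0cov E0aff').
exact: (Ecell_facets phinoo phiusc phiconc fphi HA suppE Hxi E0c E0cov E0aff').
Qed.
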